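(* Let $\mathcal P$ be the language with a single unary predicate symbol $P$ (and crisp equality), and let $\mathbf A$ be the subalgebra of the standard Gödel chain $[0,1]_G$ with universe $\{0,\tfrac12,\tfrac34,1\}$. Let $\langle\mathbf A,\mathbf M\rangle$ and $\langle\mathbf A,\mathbf N\rangle$ be the structures with domain $\mathbb N$ and $P_{\mathbf M}(n)=\tfrac34$, $P_{\mathbf N}(n)=\tfrac12$ for all $n$. Then every $\mathcal P$-sentence has value $1$ in $\langle\mathbf A,\mathbf M\rangle$ iff it has value $1$ in $\langle\mathbf A,\mathbf N\rangle$. Let $\mathcal K$ be the class of $\mathcal P$-structures over $\mathbf A$ whose natural expansion to $\mathcal P^{\mathbf A}$ gives value $1$ to the sentence $\overline{3/4}\to(\forall x)P(x)$. Then $\mathcal K$ is closed under isomorphisms, substructures and ultraproducts, $\langle\mathbf A,\mathbf M\rangle\in\mathcal K$, $\langle\mathbf A,\mathbf N\rangle\notin\mathcal K$, and consequently $\mathcal K$ is not axiomatized by any set of universal $\mathcal P$-sentences (sentences without truth constants).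
   Context: The standard Gödel chain $[0,1]_G$ is $[0,1]$ with $x\wedge y=\min$, $x\vee y=\max$, strong conjunction $x\& y=\min(x,y)$, implication $x\to y=1$ if $x\le y$ and $y$ otherwise, and constants $0,1$. An $\mathbf{A}$-structure $\langle \mathbf A,\mathbf M\rangle$ consists of a nonempty domain $M$ and, for each $n$-ary predicate symbol, a map $M^n\to A$; equality $\approx$ is crisp (value $1$ on equal, $0$ on distinct elements). Truth values are computed Tarski-style: connectives by the operations of $\mathbf A$, $\forall$ by infimum, $\exists$ by supremum over the domain. $\mathcal P^{\mathbf A}$ is $\mathcal P$ expanded by a truth constant $\overline a$ for each $a\in A$; the natural expansion interprets $\overline a$ as $a$. Substructures are over the same $\mathbf A$: smaller domain with predicates interpreted by restriction. A class is axiomatized by a set of sentences $\Sigma$ if it consists exactly of the structures in which all sentences of $\Sigma$ have value $1$. A universal sentence has the form $(\forall\overrightarrow x)\psi$ with $\psi$ quantifier-free. *)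

(* Defs.v *)
From Stdlib Require Import Reals Arith List Classical ClassicalEpsilon.
Set Implicit Arguments.

Inductive A : Type := a0 | ah | a34 | a1.

Definition aval (a : A) : R :=
  match a with a0 => 0%R | ah => (1/2)%R | a34 => (3/4)%R | a1 => 1%R end.

Definition rank (a : A) : nat :=
  match a with a0 => 0 | ah => 1 | a34 => 2 | a1 => 3 end.
Definition ale (a b : A) : bool := Nat.leb (rank a) (rank b).

Definition amin (a b : A) : A := if ale a b then a else b.
Definition amax (a b : A) : A := if ale a b then b else a.
Definition aimp (a b : A) : A := if ale a b then a1 else b.

Record structure : Type := Structure {
  dom : Type;
  dom_inh : inhabited dom;
  pred : dom -> A }.

Definition ainf {D : Type} (f : D -> A) : A :=
  if excluded_middle_informative (forall d, f d = a1) then a1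
  else if excluded_middle_informative (forall d, ale a34 (f d) = true) then a34
  else if excluded_middle_informative (forall d, ale ah (f d) = true) then ah
  else a0.
Definition asup {D : Type} (f : D -> A) : A :=
  if excluded_middle_informative (exists d, f d = a1) then a1
  else if excluded_middle_informative (exists d, ale a34 (f d) = true) then a34
  else if excluded_middle_informative (exists d, ale ah (f d) = true) then ah
  else a0.

(** FConst a is the truth constant \overline{a}; FBot/FTop are the constants 0,1
    of the language.  Formulas of the plain language P are those without FConst. *)
Inductive form : Type :=
| FPred (x : nat)
| FEq (x y : nat)
| FBot | FTop
| FConst (a : A)
| FAnd (f g : form) | FOr (f g : form) | FConj (f g : form) | FImp (f g : form)
| FAll (x : nat) (f : form) | FEx (x : nat) (f : form).

Fixpoint no_consts (f : form) : Prop :=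
  match f with
  | FConst _ => False
  | FAnd f g | FOr f g | FConj f g | FImp f g => no_consts f /\ no_consts g
  | FAll _ f | FEx _ f => no_consts f
  | _ => True
  end.

Fixpoint free_in (z : nat) (f : form) : Prop :=
  match f with
  | FPred x => z = x
  | FEq x y => z = x \/ z = y
  | FBot | FTop | FConst _ => False
  | FAnd f g | FOr f g | FConj f g | FImp f g => free_in z f \/ free_in z g
  | FAll x f | FEx x f => z <> x /\ free_in z f
  end.

Definition sentence (f : form) : Prop := forall z, ~ free_in z f.

Fixpoint qfree (f : form) : Prop :=
  match f with
  | FAll _ _ | FEx _ _ => False
  | FAnd f g | FOr f g | FConj f g | FImp f g => qfree f /\ qfree g
  | _ => True
  end.

Definition universal (f : form) : Prop :=
  exists (xs : list nat) (psi : form), qfree psi /\ f = fold_right FAll psi xs.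

Definition P_sentence (f : form) : Prop := sentence f /\ no_consts f.

Definition upd {D : Type} (v : nat -> D) (x : nat) (d : D) : nat -> D :=
  fun y => if Nat.eqb y x then d else v y.

Fixpoint eval (S : structure) (v : nat -> dom S) (f : form) : A :=
  match f with
  | FPred x => pred S (v x)
  | FEq x y => if excluded_middle_informative (v x = v y) then a1 else a0
  | FBot => a0
  | FTop => a1
  | FConst a => a
  | FAnd f g => amin (eval S v f) (eval S v g)
  | FOr f g => amax (eval S v f) (eval S v g)
  | FConj f g => amin (eval S v f) (eval S v g)
  | FImp f g => aimp (eval S v f) (eval S v g)
  | FAll x f => ainf (fun d : dom S => eval S (upd v x d) f)
  | FEx x f => asup (fun d : dom S => eval S (upd v x d) f)
  end.

Definition default (S : structure) : dom S := epsilon (dom_inh S) (fun _ => True).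

(* value of a sentence (independent of the assignment) *)
Definition value (S : structure) (f : form) : A := eval S (fun _ => default S) f.

Definition strM : structure := @Structure nat (inhabits 0) (fun _ => a34).
Definition strN : structure := @Structure nat (inhabits 0) (fun _ => ah).

Definition K_sentence : form := FImp (FConst a34) (FAll 0 (FPred 0)).
Definition inK (S : structure) : Prop := value S K_sentence = a1.

Definition iso (S T : structure) (f : dom S -> dom T) : Prop :=
  (forall x y, f x = f y -> x = y) /\ (forall y, exists x, f x = y) /\
  (forall x, pred T (f x) = pred S x).

Definition substr (S : structure) (X : dom S -> Prop) (hX : exists x, X x)
  : structure :=
  @Structure {x : dom S | X x}
    (let (x, hx) := hX in inhabits (exist _ x hx))
    (fun x => pred S (proj1_sig x)).

Definition ultrafilter {I : Type} (U : (I -> Prop) -> Prop) : Prop :=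
  U (fun _ => True) /\ ~ U (fun _ => False) /\
  (forall X Y : I -> Prop, U X -> (forall i, X i -> Y i) -> U Y) /\
  (forall X Y : I -> Prop, U X -> U Y -> U (fun i => X i /\ Y i)) /\
  (forall X : I -> Prop, U X \/ U (fun i => ~ X i)).

Section Ultraproduct.
Variables (I : Type) (S : I -> structure) (U : (I -> Prop) -> Prop).

Definition uprod_elt := forall i, dom (S i).

(* the class of x modulo x ~ y iff {i | x i = y i} in U *)
Definition uclass (x : uprod_elt) : uprod_elt -> Prop :=
  fun y => U (fun i => x i = y i).

Definition udom : Type := {c : uprod_elt -> Prop | exists x, c = uclass x}.

Definition udom_inh : inhabited udom :=
  inhabits (exist (fun c => exists x, c = uclass x)
                  (uclass (fun i => epsilon (dom_inh (S i)) (fun _ => True)))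
                  (ex_intro _ _ eq_refl)).

(* P([x]) = the a in A with {i | P_i(x i) = a} in U *)
Definition upred_at (c : udom) (a : A) : Prop :=
  exists x, uclass x = proj1_sig c /\ U (fun i => pred (S i) (x i) = a).

Definition upred (c : udom) : A :=
  if excluded_middle_informative (upred_at c a1) then a1
  else if excluded_middle_informative (upred_at c a34) then a34
  else if excluded_middle_informative (upred_at c ah) then ah
  else a0.

Definition ultraproduct : structure := @Structure udom udom_inh upred.
End Ultraproduct.

Definition axiomatizes (Sigma : form -> Prop) (K : structure -> Prop) : Prop :=
  forall S : structure, K S <-> (forall f, Sigma f -> value S f = a1).

(* Main.v *)
Require Import Defs.
From Stdlib Require Import Reals Arith List Classical ClassicalEpsilon.

Definition good (a : A) : Prop := a <> ah.
Definition psi (a : A) : A := match a with a34 => ah | x => x end.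

Ltac kill_branch :=
  match goal with
  | n : ~ (forall d : nat, _) |- _ =>
      exfalso; apply n; intro d;
      repeat match goal with H : forall _ : nat, _ |- _ => specialize (H d) end;
      repeat match goal with H : _ /\ _ |- _ => destruct H end;
      match goal with E : _ = psi (?t) |- _ => rewrite E in *; destruct t end;
      simpl in *; (reflexivity || discriminate || congruence || tauto)
  | n : ~ (exists d : nat, _), e : exists d : nat, _ |- _ =>
      exfalso; apply n; destruct e as [d ed]; exists d;
      repeat match goal with H : forall _ : nat, _ |- _ => specialize (H d) end;
      repeat match goal with H : _ /\ _ |- _ => destruct H end;
      match goal with E : _ = psi (?t) |- _ => rewrite E in *; destruct t end;
      simpl in *; (reflexivity || discriminate || congruence || tauto)
  end.

Lemma key : forall f, no_consts f -> forall v : nat -> nat,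
  good (eval strM v f) /\ eval strN v f = psi (eval strM v f).
Proof.
  induction f; simpl; intros Hc v; try contradiction.
  - split; [discriminate | reflexivity].
  - destruct (excluded_middle_informative (v x = v y)); split; try discriminate; reflexivity.
  - split; [discriminate | reflexivity].
  - split; [discriminate | reflexivity].
  - destruct Hc as [H1 H2]; destruct (IHf1 H1 v) as [g1 e1]; destruct (IHf2 H2 v) as [g2 e2].
    rewrite e1, e2. destruct (eval strM v f1), (eval strM v f2); unfold good in *; simpl;
    split; try discriminate; try reflexivity; congruence.
  - destruct Hc as [H1 H2]; destruct (IHf1 H1 v) as [g1 e1]; destruct (IHf2 H2 v) as [g2 e2].
    rewrite e1, e2. destruct (eval strM v f1), (eval strM v f2); unfold good in *; simpl;
    split; try discriminate; try reflexivity; congruence.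
  - destruct Hc as [H1 H2]; destruct (IHf1 H1 v) as [g1 e1]; destruct (IHf2 H2 v) as [g2 e2].
    rewrite e1, e2. destruct (eval strM v f1), (eval strM v f2); unfold good in *; simpl;
    split; try discriminate; try reflexivity; congruence.
  - destruct Hc as [H1 H2]; destruct (IHf1 H1 v) as [g1 e1]; destruct (IHf2 H2 v) as [g2 e2].
    rewrite e1, e2. destruct (eval strM v f1), (eval strM v f2); unfold good in *; simpl;
    split; try discriminate; try reflexivity; congruence.
  - assert (IH := fun d => IHf Hc (upd v x d)). simpl in IH.
    unfold ainf.
    repeat destruct excluded_middle_informative; simpl; try (split; [discriminate|reflexivity]);
    try kill_branch.
  - assert (IH := fun d => IHf Hc (upd v x d)). simpl in IH.
    unfold asup.
    repeat destruct excluded_middle_informative; simpl; try (split; [discriminate|reflexivity]);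
    try kill_branch.
Qed.

Lemma part1 : forall f : form, P_sentence f -> (value strM f = a1 <-> value strN f = a1).
Proof.
  intros f [_ Hc]. unfold value.
  destruct (key f Hc (fun _ => default strM)) as [g e].
  change (default strN) with (default strM). rewrite e.
  destruct (eval strM (fun _ => default strM) f); simpl; split; congruence.
Qed.

Lemma inK_iff : forall S, inK S <-> forall d, ale a34 (pred S d) = true.
Proof.
  intro S. unfold inK, value, K_sentence. simpl.
  unfold upd. simpl. unfold ainf.
  repeat destruct excluded_middle_informative; simpl; split; intros; try discriminate; auto.
  all: try (rewrite e; reflexivity).
  all: try (exfalso; apply n; auto; fail).
  all: try (match goal with H: forall d, ale a34 _ = true |- _ => exfalso; apply n; intro d; specialize (H d) end; 
    match goal with H : ale a34 ?t = true |- _ => destruct t; simpl in *; auto; discriminate end).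
  all: exfalso; auto.
Qed.

Theorem mainTheorem6 :
  (forall f : form, P_sentence f -> (value strM f = a1 <-> value strN f = a1)) /\
  (forall (S T : structure) (h : dom S -> dom T), iso S T h -> inK S -> inK T) /\
  (forall (S : structure) (X : dom S -> Prop) (hX : exists x, X x),
      inK S -> inK (substr S X hX)) /\
  (forall (I : Type) (S : I -> structure) (U : (I -> Prop) -> Prop),
      ultrafilter U -> (forall i, inK (S i)) -> inK (ultraproduct S U)) /\
  inK strM /\ ~ inK strN /\
  ~ (exists Sigma : form -> Prop,
        (forall f, Sigma f -> P_sentence f /\ universal f) /\
        axiomatizes Sigma inK).
Proof.
  assert (KM : inK strM) by (apply inK_iff; reflexivity).
  assert (KN : ~ inK strN) by (rewrite inK_iff; intro H; specialize (H 0); discriminate).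
  split; [exact part1|].
  split.
  { intros S T h [_ [Hs Hp]] HK. rewrite inK_iff in *. intro y.
    destruct (Hs y) as [x <-]. rewrite Hp. apply HK. }
  split.
  { intros S X hX HK. rewrite inK_iff in *. intros [x hx]. simpl. apply HK. }
  split.
  { intros I S U [UT [UF [Up [UI Uc]]]] HK. apply inK_iff. intros [c [x Hx]].
    simpl. unfold upred.
    assert (Hall : forall i, pred (S i) (x i) = a1 \/ pred (S i) (x i) = a34).
    { intro i. pose proof (proj1 (inK_iff (S i)) (HK i) (x i)).
      destruct (pred (S i) (x i)); simpl in *; auto; discriminate. }
    destruct (excluded_middle_informative _); [reflexivity|].
    destruct (excluded_middle_informative _); [reflexivity|].
    exfalso.
    destruct (Uc (fun i => pred (S i) (x i) = a1)) as [H1|H1].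
    - apply n; exists x; split; [symmetry; exact Hx | exact H1].
    - apply n0; exists x; split; [symmetry; exact Hx|].
      apply (Up _ _ H1). intros i Hi. destruct (Hall i); tauto. }
  split; [exact KM|]. split; [exact KN|].
  intros [Sigma [HS Hax]]. apply KN. apply Hax. intros f Hf.
  apply part1; [apply (HS f Hf)|]. apply Hax; assumption.
Qed.
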